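(* Let $\mathcal{C}$ be a symmetric monoidal category with discarding $\top$, completely mixed states $\mu$, zero morphisms and normalisation, which has split (co)kernels, satisfies strong pure exclusion, has $\top_A=0\Rightarrow\mu_A=0\Rightarrow 1_A=0$ for all objects $A$, and has kernel composition. Then $\mathcal{C}$ satisfies the pure composition axiom: for all causal pure states $\psi$ of $A\otimes B$ and $\phi$ of $A$, the state $(\overline{\phi}\otimes 1_B)\circ\psi$ and the effect $\overline{\psi}\circ(\phi\otimes 1_B)$ are pure, and $\overline{(\overline{\phi}\otimes 1_B)\circ\psi}=\overline{\psi}\circ(\phi\otimes 1_B)$.
   Context: States: $I\to A$; effects: $A\to I$; scalars $I\to I$; unitors suppressed. Discarding: effects $\top_A$ with $\top_{A\otimes B}=\top_A\otimes\top_B$, $\top_I=1_I$. Completely mixed states: $\mu_A$ with $\mu_{A\otimes B}=\mu_A\otimes\mu_B$, $\mu_I=1_I$. Causal: $\top_B\circ f=\top_A$; co-causal: $f\circ\mu_A=\mu_B$. Zero morphisms: absorbing $0\colon A\to B$. Normalisation: every non-zero state $\rho$ is $\sigma\otimes r$ for a scalar $r$ and a unique causal state $\sigma$ (its normalisation). Pure: $f\colon A\to B$ is pure if $f=0$ or whenever $(1_B\otimes\top_C)\circ g=f$ for $g\colon A\to B\otimes C$, then $g=f\otimes\rho$ for some causal state $\rho$. Trivial object: $1_A=\mu_A\circ\top_A$. Strong pure exclusion: every pure state $\psi$ of a non-trivial object has a non-zero effect $e$ with $e\circ\psi=0$, and every pure effect $\phi$ on a non-trivial object has a non-zero state $\rho$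 with $\phi\circ\rho=0$. Kernel of $f$: $\ker(f)$ with $f\circ g=0$ iff $g=\ker(f)\circ h$ for unique $h$; cokernel dually. Kernels taken causal, cokernels co-causal. Split (co)kernels: every morphism has a causal kernel and a co-causal cokernel; for each causal kernel $k$ there is a unique co-causal cokernel $\overline{k}$ with $\overline{k}\circ k=1$, and $k$ is the unique causal kernel with this property. Under these hypotheses every causal pure state $\psi$ has a unique pure co-causal effect $\overline{\psi}$ with $\overline{\psi}\circ\psi=1_I$; this is extended to all pure states by $\overline{0}=0$ and $\overline{\psi}:=\overline{\phi}\otimes r$ for non-zero pure $\psi$ with normalisation $\phi$ and $r=\top\circ\psi$. Kernel composition: kernels and cokernels are closed under $\otimes$, cokernels send pure states to pure states, and for every causal kernel $k\colon B\to A$ and pure state $\psi$ of $A$, $\overline{\overline{k}\circ\psi}=\overline{\psi}\circ k$. *)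

(* Defs.v *)
Set Implicit Arguments.
Unset Strict Implicit.

Record SMC := {
  ob : Type;
  hom : ob -> ob -> Type;
  comp : forall A B C : ob, hom B C -> hom A B -> hom A C;
  idm : forall A : ob, hom A A;
  comp_id_l : forall A B (f : hom A B), comp (idm B) f = f;
  comp_id_r : forall A B (f : hom A B), comp f (idm A) = f;
  comp_assoc : forall A B C D (f : hom A B) (g : hom B C) (h : hom C D),
      comp h (comp g f) = comp (comp h g) f;

  tens : ob -> ob -> ob;
  unit : ob;
  tensm : forall A B C D : ob, hom A B -> hom C D -> hom (tens A C) (tens B D);
  tensm_id : forall A B, tensm (idm A) (idm B) = idm (tens A B);
  tensm_comp : forall A1 A2 A3 B1 B2 B3 (f : hom A1 A2) (f' : hom A2 A3)
      (g : hom B1 B2) (g' : hom B2 B3),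
      tensm (comp f' f) (comp g' g) = comp (tensm f' g') (tensm f g);

  assoc : forall A B C, hom (tens (tens A B) C) (tens A (tens B C));
  assoc_inv : forall A B C, hom (tens A (tens B C)) (tens (tens A B) C);
  lunit : forall A, hom (tens unit A) A;
  lunit_inv : forall A, hom A (tens unit A);
  runit : forall A, hom (tens A unit) A;
  runit_inv : forall A, hom A (tens A unit);
  braid : forall A B, hom (tens A B) (tens B A);

  assoc_iso1 : forall A B C, comp (assoc_inv A B C) (assoc A B C) = idm _;
  assoc_iso2 : forall A B C, comp (assoc A B C) (assoc_inv A B C) = idm _;
  lunit_iso1 : forall A, comp (lunit_inv A) (lunit A) = idm _;
  lunit_iso2 : forall A, comp (lunit A) (lunit_inv A) = idm _;
  runit_iso1 : forall A, comp (runit_inv A) (runit A) = idm _;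
  runit_iso2 : forall A, comp (runit A) (runit_inv A) = idm _;

  assoc_nat : forall A A' B B' C C' (f : hom A A') (g : hom B B') (h : hom C C'),
      comp (assoc A' B' C') (tensm (tensm f g) h)
      = comp (tensm f (tensm g h)) (assoc A B C);
  lunit_nat : forall A B (f : hom A B),
      comp (lunit B) (tensm (idm unit) f) = comp f (lunit A);
  runit_nat : forall A B (f : hom A B),
      comp (runit B) (tensm f (idm unit)) = comp f (runit A);
  braid_nat : forall A A' B B' (f : hom A A') (g : hom B B'),
      comp (braid A' B') (tensm f g) = comp (tensm g f) (braid A B);

  pentagon : forall A B C D,
      comp (assoc A B (tens C D)) (assoc (tens A B) C D)
      = comp (tensm (idm A) (assoc B C D))
             (comp (assoc A (tens B C) D) (tensm (assoc A B C) (idm D)));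
  triangle : forall A B,
      comp (tensm (idm A) (lunit B)) (assoc A unit B) = tensm (runit A) (idm B);
  hexagon : forall A B C,
      comp (assoc B C A) (comp (braid A (tens B C)) (assoc A B C))
      = comp (tensm (idm B) (braid A C))
             (comp (assoc B A C) (tensm (braid A B) (idm C)));
  braid_invol : forall A B, comp (braid B A) (braid A B) = idm (tens A B)
}.

Arguments hom : clear implicits.
Arguments comp {s A B C} _ _.
Arguments idm {s} A.
Arguments tens {s} _ _.
Arguments unit {s}.
Arguments tensm {s A B C D} _ _.
Arguments assoc {s} A B C.
Arguments assoc_inv {s} A B C.
Arguments lunit {s} A.
Arguments lunit_inv {s} A.
Arguments runit {s} A.
Arguments runit_inv {s} A.
Arguments braid {s} A B.

Notation "g ∘ f" := (comp g f) (at level 40, left associativity).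
Notation "f ⊗ g" := (tensm f g) (at level 35).

(** * A symmetric monoidal category equipped with the data of the paper:
    discarding effects [top], completely mixed states [mu] and a chosen
    family of (candidate) zero morphisms [zer]. *)

Record Data := {
  cat :> SMC;
  top : forall A : ob cat, hom cat A unit;
  mu : forall A : ob cat, hom cat unit A;
  zer : forall A B : ob cat, hom cat A B
}.

Arguments top {d} A.
Arguments mu {d} A.
Arguments zer {d} A B.


Definition is_discarding (X : Data) : Prop :=
  (forall A B : ob X, top (tens A B) = lunit unit ∘ (top A ⊗ top B))
  /\ top (@unit X) = idm unit.

Definition is_cmixed (X : Data) : Prop :=
  (forall A B : ob X, mu (tens A B) = (mu A ⊗ mu B) ∘ lunit_inv unit)
  /\ mu (@unit X) = idm unit.

Definition is_zero (X : Data) : Prop :=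
  (forall (A B C : ob X) (f : hom X B C), f ∘ zer A B = zer A C)
  /\ (forall (A B C : ob X) (g : hom X A B), zer B C ∘ g = zer A C)
  /\ (forall (A B C D : ob X) (f : hom X A B), f ⊗ zer C D = zer (tens A C) (tens B D))
  /\ (forall (A B C D : ob X) (f : hom X A B), zer C D ⊗ f = zer (tens C A) (tens D B)).

Definition causal {X : Data} {A B : ob X} (f : hom X A B) : Prop :=
  top B ∘ f = top A.

Definition cocausal {X : Data} {A B : ob X} (f : hom X A B) : Prop :=
  f ∘ mu A = mu B.

Definition stensor {X : Data} {A : ob X} (s : hom X unit A) (r : hom X unit unit)
  : hom X unit A := runit A ∘ (s ⊗ r) ∘ lunit_inv unit.

Definition etensor {X : Data} {A : ob X} (e : hom X A unit) (r : hom X unit unit)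
  : hom X A unit := lunit unit ∘ (e ⊗ r) ∘ runit_inv A.

Definition has_normalisation (X : Data) : Prop :=
  forall (A : ob X) (rho : hom X unit A), rho <> zer unit A ->
    exists sigma : hom X unit A,
      causal sigma /\ (exists r, rho = stensor sigma r)
      /\ (forall sigma' : hom X unit A,
            causal sigma' -> (exists r, rho = stensor sigma' r) -> sigma' = sigma).

Definition pure {X : Data} {A B : ob X} (f : hom X A B) : Prop :=
  f = zer A B \/
  forall (C : ob X) (g : hom X A (tens B C)),
    runit B ∘ (idm B ⊗ top C) ∘ g = f ->
    exists rho : hom X unit C, causal rho /\ g = (f ⊗ rho) ∘ runit_inv A.

Definition trivial_ob {X : Data} (A : ob X) : Prop :=
  idm A = mu A ∘ top A.

Definition strong_pure_exclusion (X : Data) : Prop :=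
  forall A : ob X, ~ trivial_ob A ->
    (forall psi : hom X unit A, pure psi ->
        exists e : hom X A unit, e <> zer A unit /\ e ∘ psi = zer unit unit)
    /\ (forall phi : hom X A unit, pure phi ->
        exists rho : hom X unit A, rho <> zer unit A /\ phi ∘ rho = zer unit unit).

Definition zero_chain (X : Data) : Prop :=
  forall A : ob X,
    (top A = zer A unit -> mu A = zer unit A) /\ (mu A = zer unit A -> idm A = zer A A).

Definition is_kernel {X : Data} {A B K : ob X} (f : hom X A B) (k : hom X K A) : Prop :=
  f ∘ k = zer K B /\
  forall (C : ob X) (g : hom X C A), f ∘ g = zer C B -> exists! h : hom X C K, g = k ∘ h.

Definition is_cokernel {X : Data} {A B Q : ob X} (f : hom X A B) (c : hom X B Q) : Prop :=
  c ∘ f = zer A Q /\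
  forall (D : ob X) (g : hom X B D), g ∘ f = zer A D -> exists! h : hom X Q D, g = h ∘ c.

Definition kernel_mor {X : Data} {K A : ob X} (k : hom X K A) : Prop :=
  exists (B : ob X) (f : hom X A B), is_kernel f k.

Definition cokernel_mor {X : Data} {A Q : ob X} (c : hom X A Q) : Prop :=
  exists (B : ob X) (f : hom X B A), is_cokernel f c.

Definition split_cok {X : Data} {K A : ob X} (k : hom X K A) (c : hom X A K) : Prop :=
  cokernel_mor c /\ cocausal c /\ c ∘ k = idm K.

Definition has_split_kernels (X : Data) : Prop :=
  (forall (A B : ob X) (f : hom X A B),
      exists (K : ob X) (k : hom X K A), is_kernel f k /\ causal k)
  /\ (forall (A B : ob X) (f : hom X A B),
      exists (Q : ob X) (c : hom X B Q), is_cokernel f c /\ cocausal c)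
  /\ (forall (K A : ob X) (k : hom X K A), kernel_mor k -> causal k ->
      exists c : hom X A K,
        split_cok k c
        /\ (forall c' : hom X A K, split_cok k c' -> c' = c)
        /\ (forall k' : hom X K A, kernel_mor k' -> causal k' -> c ∘ k' = idm K -> k' = k)).

(** [e] is "the" effect ψ̄ of a causal pure state ψ: pure, co-causal, ψ̄ ∘ ψ = 1. *)
Definition bar_causal {X : Data} {A : ob X} (psi : hom X unit A) (e : hom X A unit) : Prop :=
  pure e /\ cocausal e /\ e ∘ psi = idm unit.

(** Extension of the overline to all pure states: 0̄ = 0, and for non-zero ψ
    with normalisation σ and r = top ∘ ψ, ψ̄ = σ̄ ⊗ r. *)
Definition is_bar {X : Data} {A : ob X} (psi : hom X unit A) (e : hom X A unit) : Prop :=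
  (psi = zer unit A /\ e = zer A unit)
  \/ (psi <> zer unit A /\
      exists (sigma : hom X unit A) (sigmab : hom X A unit),
        causal sigma /\ psi = stensor sigma (top A ∘ psi)
        /\ bar_causal sigma sigmab /\ e = etensor sigmab (top A ∘ psi)).

Definition kernel_composition (X : Data) : Prop :=
  (forall (K A K' A' : ob X) (k : hom X K A) (k' : hom X K' A'),
      kernel_mor k -> causal k -> kernel_mor k' -> causal k' -> kernel_mor (k ⊗ k'))
  /\ (forall (A Q A' Q' : ob X) (c : hom X A Q) (c' : hom X A' Q'),
      cokernel_mor c -> cocausal c -> cokernel_mor c' -> cocausal c' ->
      cokernel_mor (c ⊗ c'))
  /\ (forall (A Q : ob X) (c : hom X A Q) (psi : hom X unit A),
      cokernel_mor c -> cocausal c -> pure psi -> pure (c ∘ psi))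
  /\ (forall (B A : ob X) (k : hom X B A) (kb : hom X A B),
      kernel_mor k -> causal k -> split_cok k kb ->
      forall (psi : hom X unit A) (e : hom X A unit),
        pure psi -> is_bar psi e -> is_bar (kb ∘ psi) (e ∘ k)).

Definition pure_composition (X : Data) : Prop :=
  forall (A B : ob X) (psi : hom X unit (tens A B)) (phi : hom X unit A)
         (psib : hom X (tens A B) unit) (phib : hom X A unit),
    causal psi -> pure psi -> causal phi -> pure phi ->
    bar_causal psi psib -> bar_causal phi phib ->
    pure (lunit B ∘ (phib ⊗ idm B) ∘ psi)
    /\ pure (psib ∘ (phi ⊗ idm B) ∘ lunit_inv B)
    /\ is_bar (lunit B ∘ (phib ⊗ idm B) ∘ psi) (psib ∘ (phi ⊗ idm B) ∘ lunit_inv B).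

(* Main.v *)
Require Import Defs.
From Stdlib Require Import Classical.
Set Implicit Arguments.
Unset Strict Implicit.

Ltac ra := repeat rewrite <- comp_assoc.

Lemma ext2 (X : SMC) A B C D (a : hom X C D) (b : hom X B C) (c : hom X B D) (x : hom X A B) :
  a ∘ b = c -> a ∘ (b ∘ x) = c ∘ x.
Proof. intros H; rewrite comp_assoc, H; reflexivity. Qed.

Arguments ext2 {X A B C D a b c} x H.
Tactic Notation "rw2" open_constr(H) := rewrite (ext2 _ H).
Tactic Notation "rw2r" open_constr(H) := rewrite <- (ext2 _ H).

Lemma tens_comp_r (X : SMC) A B C D (f : hom X B C) (g : hom X A B) :
  (f ⊗ idm D) ∘ (g ⊗ idm D) = (f ∘ g) ⊗ idm D.
Proof. rewrite <- tensm_comp, comp_id_l; reflexivity. Qed.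

Lemma tens_comp_l (X : SMC) A B C D (f : hom X B C) (g : hom X A B) :
  (idm D ⊗ f) ∘ (idm D ⊗ g) = idm D ⊗ (f ∘ g).
Proof. rewrite <- tensm_comp, comp_id_l; reflexivity. Qed.

Lemma cancel_r (X : SMC) A B C (f g : hom X B C) (i : hom X A B) (j : hom X B A) :
  i ∘ j = idm B -> f ∘ i = g ∘ i -> f = g.
Proof.
  intros Hij H. rewrite <- (comp_id_r f), <- (comp_id_r g), <- Hij, !comp_assoc, H; reflexivity.
Qed.

Lemma cancel_l (X : SMC) A B C (f g : hom X A B) (i : hom X B C) (j : hom X C B) :
  j ∘ i = idm B -> i ∘ f = i ∘ g -> f = g.
Proof.
  intros Hij H. rewrite <- (comp_id_l f), <- (comp_id_l g), <- Hij, <- !comp_assoc, H; reflexivity.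
Qed.

Lemma lunit_inv_nat (X : SMC) A B (f : hom X A B) :
  (idm unit ⊗ f) ∘ lunit_inv A = lunit_inv B ∘ f.
Proof.
  apply cancel_l with (i := lunit B) (j := lunit_inv B); [apply lunit_iso1|].
  rewrite !comp_assoc, lunit_nat, lunit_iso2, comp_id_l, <- comp_assoc, lunit_iso2, comp_id_r.
  reflexivity.
Qed.

Lemma runit_inv_nat (X : SMC) A B (f : hom X A B) :
  (f ⊗ idm unit) ∘ runit_inv A = runit_inv B ∘ f.
Proof.
  apply cancel_l with (i := runit B) (j := runit_inv B); [apply runit_iso1|].
  rewrite !comp_assoc, runit_nat, runit_iso2, comp_id_l, <- comp_assoc, runit_iso2, comp_id_r.
  reflexivity.
Qed.

Lemma lunit_faithful (X : SMC) A B (f g : hom X A B) :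
  idm unit ⊗ f = idm unit ⊗ g -> f = g.
Proof.
  intros H.
  apply cancel_r with (i := lunit A) (j := lunit_inv A); [apply lunit_iso2|].
  rewrite <- !lunit_nat, H; reflexivity.
Qed.

Lemma kelly (X : SMC) (A B : ob X) :
  lunit (tens A B) ∘ assoc unit A B = lunit A ⊗ idm B.
Proof.
  apply lunit_faithful.
  apply cancel_r with (i := assoc unit (tens unit A) B ∘ (assoc unit unit A ⊗ idm B))
                  (j := (assoc_inv unit unit A ⊗ idm B) ∘ assoc_inv unit (tens unit A) B).
  { ra. rw2 (tens_comp_r _ _ _). rewrite assoc_iso2, tensm_id, comp_id_l, assoc_iso2. reflexivity. }
  rewrite <- tens_comp_l. ra.
  rewrite <- pentagon. rw2 (triangle _ _). rewrite <- tensm_id, <- assoc_nat.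
  rewrite !comp_assoc, <- assoc_nat. ra. rewrite tens_comp_r, triangle. reflexivity.
Qed.

Lemma lunit_eq_runit (X : SMC) : lunit (@unit X) = runit unit.
Proof.
  assert (E1 : idm unit ⊗ lunit (@unit X) = lunit (tens unit unit)).
  { apply cancel_l with (i := lunit (@unit X)) (j := lunit_inv unit); [apply lunit_iso1|].
    rewrite lunit_nat. reflexivity. }
  assert (E2 : lunit (@unit X) ⊗ idm unit = runit unit ⊗ idm unit).
  { rewrite <- kelly, <- triangle, E1. reflexivity. }
  apply cancel_r with (i := runit (tens (@unit X) unit)) (j := runit_inv _); [apply runit_iso2|].
  rewrite <- !runit_nat, E2. reflexivity.
Qed.

Lemma lunit_inv_eq (X : SMC) : lunit_inv (@unit X) = runit_inv unit.
Proof.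
  rewrite <- (comp_id_r (lunit_inv unit)), <- (runit_iso2 (s:=X) unit), comp_assoc,
    <- lunit_eq_runit, lunit_iso1, comp_id_l. reflexivity.
Qed.

Lemma stensor_eq (X : Data) (A : ob X) (s : hom X unit A) (r : hom X unit unit) :
  stensor s r = s ∘ r.
Proof.
  unfold stensor.
  replace (s ⊗ r) with ((s ⊗ idm unit) ∘ (idm unit ⊗ r))
    by (rewrite <- tensm_comp, comp_id_l, comp_id_r; reflexivity).
  ra. rewrite lunit_inv_nat, lunit_inv_eq. rewrite !comp_assoc, runit_nat. ra.
  rw2 (runit_iso2 _). rewrite comp_id_l. reflexivity.
Qed.

Lemma etensor_eq (X : Data) (A : ob X) (e : hom X A unit) (r : hom X unit unit) :
  etensor e r = r ∘ e.
Proof.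
  unfold etensor.
  replace (e ⊗ r) with ((idm unit ⊗ r) ∘ (e ⊗ idm unit))
    by (rewrite <- tensm_comp, comp_id_l, comp_id_r; reflexivity).
  rewrite !comp_assoc, lunit_nat, lunit_eq_runit. ra. rewrite (comp_assoc _ _ (runit unit)), runit_nat.
  ra. rewrite runit_iso2, comp_id_r. reflexivity.
Qed.

Definition Hyps (X : Data) : Prop :=
  is_discarding X /\ is_cmixed X /\ is_zero X /\ has_normalisation X /\
  has_split_kernels X /\ strong_pure_exclusion X /\ zero_chain X /\ kernel_composition X.


Lemma top_I (X : Data) (H : Hyps X) : top (@unit X) = idm unit.
Proof. destruct H as [[_ h] _]; exact h. Qed.
Lemma mu_I (X : Data) (H : Hyps X) : mu (@unit X) = idm unit.
Proof. destruct H as [_ [[_ h] _]]; exact h. Qed.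
Lemma z1 (X : Data) (H : Hyps X) (A B C : ob X) (f : hom X B C) : f ∘ zer A B = zer A C.
Proof. destruct H as [_ [_ [h _]]]; apply h. Qed.
Lemma z2 (X : Data) (H : Hyps X) (A B C : ob X) (g : hom X A B) : zer B C ∘ g = zer A C.
Proof. destruct H as [_ [_ [h _]]]; apply h. Qed.
Lemma z3 (X : Data) (H : Hyps X) (A B C D : ob X) (f : hom X A B) : f ⊗ zer C D = zer (tens A C) (tens B D).
Proof. destruct H as [_ [_ [h _]]]; apply h. Qed.

Lemma all_zero (X : Data) (H : Hyps X) : idm (@unit X) = zer unit unit ->
  forall (A B : ob X) (f : hom X A B), f = zer A B.
Proof.
  intros E A B f.
  rewrite <- (comp_id_l f), <- (runit_iso2 B), <- comp_assoc, <- runit_inv_nat, E.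
  rewrite z3, z2, z1 by exact H.
  reflexivity.
Qed.

Lemma LZ (X : Data) (H : Hyps X) (A Y : ob X) (f : hom X A Y) : top Y ∘ f = zer A unit -> f = zer A Y.
Proof.
  intros Hf.
  destruct H as (HD & HM & HZ & HN & [HK1 _] & HS & HC & HKC).
  destruct (HK1 _ _ (top Y)) as (K & k & [Hk0 Hk] & Hkc).
  unfold causal in Hkc.
  destruct (Hk _ f Hf) as (h & Eh & _).
  assert (Ht : top K = zer K unit) by (rewrite <- Hkc; exact Hk0).
  destruct (HC K) as [HC1 HC2].
  specialize (HC2 (HC1 Ht)).
  rewrite Eh, <- (comp_id_r k), HC2.
  destruct HZ as (Z1 & Z2 & _). rewrite Z1, Z2. reflexivity.
Qed.

Lemma coker_of_ker (X : Data) (A B Q K : ob X) (f : hom X B A) (c : hom X A Q) (k : hom X K A) (H : Hyps X) :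
  is_cokernel f c -> is_kernel c k -> is_cokernel k c.
Proof.
  intros [Hc0 Hc] [Hk0 Hk]. split; [exact Hk0|].
  intros D g Hg.
  destruct (Hk _ f Hc0) as (f' & Ef & _).
  apply Hc. rewrite Ef, comp_assoc, Hg, z2 by exact H. reflexivity.
Qed.

Lemma kernel_idm (X : Data) (H : Hyps X) (A : ob X) : is_kernel (zer A A) (idm A).
Proof.
  split. - apply z2; exact H.
  - intros C g _. exists g. split. + rewrite comp_id_l; reflexivity.
    + intros h Eh; rewrite Eh, comp_id_l; reflexivity.
Qed.

Lemma cokernel_idm (X : Data) (H : Hyps X) (A : ob X) : is_cokernel (zer A A) (idm A).
Proof.
  split. - apply z1; exact H.
  - intros C g _. exists g. split. + rewrite comp_id_r; reflexivity.
    + intros h Eh; rewrite Eh, comp_id_r; reflexivity.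
Qed.

Lemma kernel_iso (X : Data) (A B K K' : ob X) (f : hom X A B) (k : hom X K A) (i : hom X K' K) (j : hom X K K')
  (H : Hyps X) : is_kernel f k -> j ∘ i = idm K' -> i ∘ j = idm K -> is_kernel f (k ∘ i).
Proof.
  intros [Hk0 Hk] Eji Eij. split.
  - rewrite comp_assoc, Hk0, z2 by exact H; reflexivity.
  - intros C g Hg. destruct (Hk C g Hg) as (h & Eh & Uh).
    exists (j ∘ h). split.
    + rewrite Eh. ra. rw2 Eij. rewrite comp_id_l. reflexivity.
    + intros h' Eh'. rewrite <- comp_assoc in Eh'. rewrite (Uh _ Eh'), comp_assoc, Eji, comp_id_l.
      reflexivity.
Qed.

Lemma cokernel_iso (X : Data) (A B Q Q' : ob X) (f : hom X A B) (c : hom X B Q) (i : hom X Q Q') (j : hom X Q' Q)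
  (H : Hyps X) : is_cokernel f c -> j ∘ i = idm Q -> i ∘ j = idm Q' -> is_cokernel f (i ∘ c).
Proof.
  intros [Hc0 Hc] Eji Eij. split.
  - rewrite <- comp_assoc, Hc0, z1 by exact H; reflexivity.
  - intros D g Hg. destruct (Hc D g Hg) as (h & Eh & Uh).
    exists (h ∘ j). split.
    + rewrite Eh. ra. rw2 Eji. rewrite comp_id_l. reflexivity.
    + intros h' Eh'. rewrite comp_assoc in Eh'. rewrite (Uh _ Eh'). ra. rewrite Eij, comp_id_r.
      reflexivity.
Qed.

Lemma pure_struct (X : Data) (H : Hyps X) (A : ob X) (y : hom X unit A) :
  pure y -> y <> zer unit A ->
  exists (C : ob X) (k : hom X C A), kernel_mor k /\ causal k /\ trivial_ob C /\
    top C ∘ mu C = idm unit /\ y = k ∘ mu C ∘ (top A ∘ y).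
Proof.
  intros ypure ynz. pose proof H as H'.
  destruct H as (HD & HM & HZ & HN & [HK1 [HK2 HK3]] & HS & HC & [_ [_ [HKC3 HKC4]]]).
  destruct (HK2 _ _ y) as (Q & c & [Hc0 Hc] & _).
  destruct (HK1 _ _ c) as (C & k & Hk & Hkc).
  assert (kmor : kernel_mor k) by (exists Q, c; exact Hk).
  destruct Hk as [Hk0 Hkk].
  destruct (Hkk _ y Hc0) as (h & Eh & _).
  destruct (HK3 _ _ k kmor Hkc) as (kb & [Hkbmor [Hkbco Hkbk]] & _ & _).
  assert (Hh : h = kb ∘ y) by (rewrite Eh, comp_assoc, Hkbk, comp_id_l; reflexivity).
  assert (hpure : pure h) by (rewrite Hh; apply HKC3; auto).
  assert (triv : trivial_ob C).
  { destruct (classic (trivial_ob C)) as [t|nt]; [exact t|exfalso].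
    destruct (HS C nt) as [HS1 _]. destruct (HS1 h hpure) as (e & ne & He).
    apply ne. assert (E1: (e ∘ kb) ∘ y = zer unit unit) by (rewrite <- comp_assoc, <- Hh; exact He).
    destruct (Hc _ _ E1) as (g & Eg & _).
    rewrite <- (comp_id_r e), <- Hkbk, comp_assoc, Eg, <- comp_assoc, Hk0, z1 by exact H'.
    reflexivity. }
  assert (hnz : h <> zer unit C) by (intro E; apply ynz; rewrite Eh, E, z1 by exact H'; reflexivity).
  destruct (HN _ h hnz) as (x & xc & [r Er] & _). rewrite stensor_eq in Er.
  assert (xmu : x = mu C).
  { rewrite <- (comp_id_l x), triv, <- comp_assoc. unfold causal in xc. rewrite xc, top_I, comp_id_r by exact H'.
    reflexivity. }
  assert (tm : top C ∘ mu C = idm unit).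
  { rewrite <- xmu. unfold causal in xc. rewrite xc, top_I by exact H'. reflexivity. }
  exists C, k. split; [exact kmor|]. split; [exact Hkc|]. split; [exact triv|]. split; [exact tm|].
  assert (Ey: y = k ∘ mu C ∘ r) by (rewrite Eh, Er, xmu, comp_assoc; reflexivity).
  assert (Er2 : top A ∘ y = r).
  { rewrite Ey. ra. rewrite (comp_assoc (mu C ∘ r)). unfold causal in Hkc. rewrite Hkc, comp_assoc, tm, comp_id_l.
    reflexivity. }
  rewrite Er2. exact Ey.
Qed.

Lemma pure_crit (X : Data) (H : Hyps X) (A : ob X) (E : hom X A unit) :
  (forall (Y : ob X) (h : hom X A Y), top Y ∘ h = E -> exists rho, causal rho /\ h = rho ∘ E) ->
  pure E.
Proof.
  intros Hc. right. intros C g Hg.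
  assert (Hh : top C ∘ (lunit C ∘ g) = E).
  { rewrite <- Hg, <- lunit_eq_runit, lunit_nat, comp_assoc. reflexivity. }
  destruct (Hc _ _ Hh) as (rho & rc & Er). exists rho. split; [exact rc|].
  rewrite <- (comp_id_l g), <- (lunit_iso1 C), <- comp_assoc, Er.
  replace (E ⊗ rho) with ((idm unit ⊗ rho) ∘ (E ⊗ idm unit))
    by (rewrite <- tensm_comp, comp_id_l, comp_id_r; reflexivity).
  ra. rewrite runit_inv_nat, <- lunit_inv_eq, comp_assoc, <- lunit_inv_nat. ra. reflexivity.
Qed.

Lemma bar_struct (X : Data) (H : Hyps X) (A C : ob X) (k : hom X C A) :
  kernel_mor k -> causal k -> trivial_ob C -> top C ∘ mu C = idm unit ->
  exists (c0 : hom X A C) (D : ob X) (k1 : hom X D A),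
    split_cok k c0 /\
    top C ∘ c0 ∘ (k ∘ mu C) = idm unit /\
    (forall (Y : ob X) (h : hom X A Y), h ∘ k1 = zer D Y -> h = (h ∘ (k ∘ mu C)) ∘ (top C ∘ c0)) /\
    top C ∘ c0 ∘ k1 = zer D unit /\
    (forall E : hom X A unit, E ∘ k1 = zer D unit -> pure E) /\
    cocausal (top C ∘ c0) /\
    (forall y : hom X unit A, pure y -> y = (k ∘ mu C) ∘ (top A ∘ y) ->
       forall E, is_bar y E -> E ∘ k1 = zer D unit).
Proof.
  intros kmor kc triv tm. pose proof H as H'.
  destruct H as (HD & HM & HZ & HN & [HK1 [HK2 HK3]] & HS & HC & [_ [_ [HKC3 HKC4]]]).
  destruct (HK3 _ _ k kmor kc) as (c0 & Hc0 & _ & _).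
  pose proof Hc0 as [[B0 [f0 Hcf]] [c0co c0k]].
  destruct (HK1 _ _ c0) as (D & k1 & Hk1 & k1c).
  assert (k1mor : kernel_mor k1) by (exists C, c0; exact Hk1).
  destruct (HK3 _ _ k1 k1mor k1c) as (k1b & Hk1b & _ & _).
  assert (Hcok : is_cokernel k1 c0) by (eapply coker_of_ker; eauto).
  assert (P1 : top C ∘ c0 ∘ (k ∘ mu C) = idm unit).
  { ra. rw2 c0k. rewrite comp_id_l. exact tm. }
  assert (P2 : forall (Y : ob X) (h : hom X A Y), h ∘ k1 = zer D Y -> h = (h ∘ (k ∘ mu C)) ∘ (top C ∘ c0)).
  { intros Y h Hh. destruct Hcok as [_ Hcok]. destruct (Hcok _ _ Hh) as (g & Eg & _).
    rewrite Eg. ra. rw2 c0k. rewrite comp_id_l. rw2 (eq_sym triv). rewrite comp_id_l. reflexivity. }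
  assert (P3 : top C ∘ c0 ∘ k1 = zer D unit).
  { destruct Hk1 as [Hk10 _]. rewrite <- comp_assoc, Hk10, z1 by exact H'. reflexivity. }
  assert (P4 : forall E : hom X A unit, E ∘ k1 = zer D unit -> pure E).
  { intros E HE. destruct (classic (E = zer A unit)) as [Ez|Enz]; [left; exact Ez|].
    apply pure_crit; [exact H'|]. intros Y h Hh.
    assert (hk1 : h ∘ k1 = zer D Y) by (apply LZ; [exact H'|]; rewrite comp_assoc, Hh; exact HE).
    pose proof (P2 Y h hk1) as Eh. set (s := h ∘ (k ∘ mu C)) in Eh.
    assert (snz : s <> zer unit Y).
    { intro sz. apply Enz. rewrite <- Hh, Eh, sz, z2, z1 by exact H'. reflexivity. }
    destruct (HN _ s snz) as (rho & rc & [r' Er'] & _). rewrite stensor_eq in Er'.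
    exists rho. split; [exact rc|].
    assert (Etop : top Y ∘ s = r').
    { rewrite Er', comp_assoc. unfold causal in rc. rewrite rc, top_I, comp_id_l by exact H'. reflexivity. }
    rewrite <- Hh. rewrite Eh at 2. rewrite (comp_assoc (top C ∘ c0) s (top Y)), Etop.
    transitivity (s ∘ (top C ∘ c0)); [exact Eh|]. rewrite Er'. ra. reflexivity. }
  assert (P6 : cocausal (top C ∘ c0)).
  { unfold cocausal in *. rewrite <- comp_assoc, c0co, tm, mu_I by exact H'. reflexivity. }
  exists c0, D, k1. split; [exact Hc0|]. split; [exact P1|]. split; [exact P2|]. split; [exact P3|].
  split; [exact P4|]. split; [exact P6|].
  intros y ypure Ey E HE.
  destruct (classic (y = zer unit A)) as [yz|ynz].
  { destruct HE as [[_ Ez]|[ynz _]]; [|contradiction].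
    rewrite Ez, z2 by exact H'. reflexivity. }
  assert (Hu : is_bar y (etensor (top C ∘ c0) (top A ∘ y))).
  { right. split; [exact ynz|]. exists (k ∘ mu C), (top C ∘ c0). split.
    { unfold causal in *. rewrite comp_assoc, kc, tm, top_I by exact H'. reflexivity. }
    split. { rewrite stensor_eq. exact Ey. }
    split. { split; [apply P4; exact P3|]. split; [exact P6|exact P1]. }
    reflexivity. }
  pose proof (HKC4 _ _ k1 k1b k1mor k1c Hk1b y _ ypure Hu) as B1.
  rewrite etensor_eq, <- comp_assoc, P3, z1 in B1 by exact H'.
  assert (zz : k1b ∘ y = zer unit D).
  { destruct B1 as [[Hz _]|[nz (sig & sigb & sc & Ez & [_ [_ Hb]] & Ee)]]; [exact Hz|].
    exfalso. apply nz. apply LZ; [exact H'|].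
    rewrite etensor_eq in Ee.
    assert (Q : zer D unit ∘ sig = (top D ∘ (k1b ∘ y)) ∘ sigb ∘ sig) by (rewrite Ee; reflexivity).
    rewrite z2 in Q by exact H'. rewrite <- comp_assoc, Hb, comp_id_r in Q. symmetry; exact Q. }
  pose proof (HKC4 _ _ k1 k1b k1mor k1c Hk1b y _ ypure HE) as B2.
  rewrite zz in B2.
  destruct B2 as [[_ Hz]|[nz _]]; [exact Hz|]. contradiction.
Qed.

Lemma bar_pure (X : Data) (H : Hyps X) (A : ob X) (y : hom X unit A) (E : hom X A unit) :
  pure y -> is_bar y E -> pure E.
Proof.
  intros yp Hb.
  destruct (classic (y = zer unit A)) as [yz|ynz].
  { destruct Hb as [[_ Ez]|[ynz _]]; [left; exact Ez|contradiction]. }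
  destruct (pure_struct H yp ynz) as (C & k & kmor & kc & triv & tm & Ey).
  destruct (bar_struct H kmor kc triv tm) as (c0 & D & k1 & _ & _ & _ & _ & P4 & _ & P5).
  apply P4. exact (P5 y yp Ey E Hb).
Qed.

Lemma causal_is_bar (X : Data) (H : Hyps X) (A : ob X) (psi : hom X unit A) (e : hom X A unit) :
  causal psi -> psi <> zer unit A -> bar_causal psi e -> is_bar psi e.
Proof.
  intros pc pnz Hb. right. split; [exact pnz|]. exists psi, e.
  unfold causal in pc. rewrite stensor_eq, etensor_eq, pc, top_I, comp_id_r, comp_id_l by exact H.
  auto.
Qed.

Lemma causal_nz (X : Data) (H : Hyps X) (A : ob X) (psi : hom X unit A) :
  causal psi -> idm (@unit X) <> zer unit unit -> psi <> zer unit A.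
Proof.
  intros pc nd pz. apply nd. unfold causal in pc. rewrite pz, z1, top_I in pc by exact H.
  symmetry; exact pc.
Qed.

Theorem mainTheorem9 (X : Data) :
  is_discarding X -> is_cmixed X -> is_zero X -> has_normalisation X ->
  has_split_kernels X -> strong_pure_exclusion X -> zero_chain X ->
  kernel_composition X ->
  pure_composition X.
Proof.
  intros HD HM HZ HN HK HS HC HKC.
  assert (H : Hyps X) by (unfold Hyps; tauto).
  intros A B psi phi psib phib psic psip phic phip Hpsib Hphib.
  destruct (classic (idm (@unit X) = zer unit unit)) as [deg|nd].
  { pose proof (all_zero H deg) as AZ.
    split; [left; apply AZ|]. split; [left; apply AZ|]. left; split; apply AZ. }
  pose proof (causal_nz H phic nd) as phinz.
  pose proof (causal_nz H psic nd) as psinz.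
  destruct (pure_struct H phip phinz) as (C & k0 & k0mor & k0c & triv & tm & Ephi).
  pose proof Ephi as Ephi'.
  unfold causal in phic. rewrite phic, top_I, comp_id_r in Ephi' by exact H.
  destruct (bar_struct H k0mor k0c triv tm) as (c0 & D & k1 & Hc0 & P1 & P2 & P3 & P4 & P6 & P5).
  assert (phibk1 : phib ∘ k1 = zer D unit).
  { apply (P5 phi phip Ephi). apply causal_is_bar; auto. }
  assert (Ephib : phib = top C ∘ c0).
  { rewrite (P2 _ phib phibk1), <- Ephi'. destruct Hphib as (_ & _ & E1). rewrite E1, comp_id_l.
    reflexivity. }
  destruct HKC as (KC1 & KC2 & KC3 & KC4).
  set (imap := (mu C ⊗ idm B) ∘ lunit_inv B).
  set (jmap := lunit B ∘ (top C ⊗ idm B)).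
  assert (Eji : jmap ∘ imap = idm B).
  { unfold imap, jmap. ra. rw2 (tens_comp_r _ _ _). rewrite tm, tensm_id, comp_id_l, lunit_iso2.
    reflexivity. }
  assert (Eij : imap ∘ jmap = idm (tens C B)).
  { unfold imap, jmap. ra. rw2 (lunit_iso1 _). rewrite comp_id_l, tens_comp_r, <- triv, tensm_id.
    reflexivity. }
  assert (Ek : (phi ⊗ idm B) ∘ lunit_inv B = (k0 ⊗ idm B) ∘ imap).
  { unfold imap. rewrite comp_assoc, tens_comp_r, <- Ephi'. reflexivity. }
  assert (Ekb : lunit B ∘ (phib ⊗ idm B) = jmap ∘ (c0 ⊗ idm B)).
  { unfold jmap. rewrite <- comp_assoc, tens_comp_r, <- Ephib. reflexivity. }
  assert (kmor : kernel_mor ((phi ⊗ idm B) ∘ lunit_inv B)).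
  { assert (m0 : kernel_mor (k0 ⊗ idm B)).
    { apply KC1; auto. exists B, (zer B B). apply kernel_idm; exact H.
      unfold causal. apply comp_id_r. }
    destruct m0 as (Bk & fk & Hk). exists Bk, fk. rewrite Ek.
    eapply kernel_iso; eauto. }
  assert (kc : causal ((phi ⊗ idm B) ∘ lunit_inv B)).
  { unfold causal. destruct HD as [HD1 _]. rewrite HD1. ra. rw2 (eq_sym (tensm_comp _ _ _ _)).
    rewrite phic, top_I, comp_id_r by exact H. rewrite comp_assoc, lunit_nat. ra.
    rewrite lunit_iso2, comp_id_r. reflexivity. }
  assert (kbsplit : split_cok ((phi ⊗ idm B) ∘ lunit_inv B) (lunit B ∘ (phib ⊗ idm B))).
  { split; [|split].
    - rewrite Ekb. destruct Hc0 as [[Q [f0 Hf0]] [c0co _]].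
      assert (m0 : cokernel_mor (c0 ⊗ idm B)).
      { apply KC2; auto. exists Q, f0; exact Hf0. exists B, (zer B B). apply cokernel_idm; exact H.
        unfold cocausal. apply comp_id_l. }
      destruct m0 as (Bk & fk & Hk). exists Bk, fk.
      eapply cokernel_iso; eauto.
    - unfold cocausal. destruct HM as [HM1 _]. rewrite HM1. ra. rw2 (eq_sym (tensm_comp _ _ _ _)).
      destruct Hphib as (_ & phibco & _). unfold cocausal in phibco.
      rewrite phibco, mu_I, comp_id_l, lunit_inv_nat by exact H. rewrite comp_assoc, lunit_iso2, comp_id_l.
      reflexivity.
    - ra. rw2 (tens_comp_r _ _ _). destruct Hphib as (_ & _ & E1). rewrite E1, tensm_id, comp_id_l, lunit_iso2.
      reflexivity. }
  assert (kbmor : cokernel_mor (lunit B ∘ (phib ⊗ idm B))) by (destruct kbsplit; assumption).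
  assert (kbco : cocausal (lunit B ∘ (phib ⊗ idm B))) by (destruct kbsplit as [_ [h _]]; exact h).
  assert (Hbpsi : is_bar psi psib) by (apply causal_is_bar; auto).
  pose proof (KC4 _ _ _ _ kmor kc kbsplit psi psib psip Hbpsi) as Hres.
  assert (Epb : psib ∘ (phi ⊗ idm B) ∘ lunit_inv B = psib ∘ ((phi ⊗ idm B) ∘ lunit_inv B))
    by (rewrite comp_assoc; reflexivity).
  rewrite Epb.
  assert (yp : pure (lunit B ∘ (phib ⊗ idm B) ∘ psi)) by (apply KC3; auto).
  split; [exact yp|]. split; [|exact Hres].
  exact (bar_pure H yp Hres).
Qed.
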